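(* In the setting below, fix $k$, parameters $\rho^k>0$, $\beta^k>0$, a point $(y^k,v^k)\in\Upsilon_\tau\times\mathcal V$, and an initial point $y^{k,0}\in\Upsilon_\tau$, and run Algorithm AMA. Suppose it does not terminate, i.e. it generates an infinite sequence $\{(y^{k,j},v^{k,j})\}_{j\ge1}$. Then: (i) the sequence $\{\Psi^k(y^{k,j},v^{k,j})\}_{j\ge1}$ is strictly decreasing and converges to a finite limit; (ii) the sequence $\{(y^{k,j},v^{k,j})\}_{j\ge1}$ has at least one accumulation point; (iii) every accumulation point of $\{(y^{k,j},v^{k,j})\}_{j\ge1}$ is a partially optimal solution of the problem $\min\{\Psi^k(y,v): y\in\Upsilon_\tau,\ v\in\mathcal V\}$.
   Context: Setting. $\mathcal A$ is a finite set of links; $\mathcal V=\{\Delta h: h\ge0,\ \Lambda h=d\}\subset\mathbb R^{|\mathcal A|}$ is the set of feasible link flows, where $\Delta$ is a 0/1 link–route incidence matrix, $\Lambda$ a 0/1 OD–route incidence matrix in which every route belongs to exactly one OD pair and every OD pair has at least one route, and $d>0$ a demand vector (so $\mathcal V$ is a nonempty compact convex polytope in $\mathbb R^{|\mathcal A|}_{\ge0}$). Let $u_a\ge0$, $\mathcal Y=\{y: 0\le y_a\le u_a\ \forall a\}$, $1\le\tau\le|\mathcal A|$ an integer, $\Upsilon_\tau=\{y\in\mathcal Y: |\{a: y_a>0\}|\le\tau\}$. Standing assumptions: for each $a$, the link travel time $t_a(y_a,v_a)$ is continuously differentiable and strictly increasing in $v_a$ for $y_a\ge0$; the expansion cost $G_a(y_a)$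 is nonnegative, continuously differentiable, strictly increasing and convex; $\int_0^{v_a}t_a(y_a,w)\,dw$ and $t_a(y_a,v_a)v_a$ are convex in $(y_a,v_a)$. With $\eta>0$ set $F(y,v)=\sum_a t_a(y_a,v_a)v_a+\eta\sum_a G_a(y_a)$, $f(y,v)=\sum_a\int_0^{v_a}t_a(y_a,w)\,dw$, $g(y)=\min_{v\in\mathcal V}f(y,v)$. Under these assumptions $g$ is convex and continuously differentiable on $\mathcal Y$ (a known fact). Define $\Phi(y,v;\bar y,\bar v)=f(y,v)-g(\bar y)-\nabla g(\bar y)^{\mathsf T}(y-\bar y)$ and $$\Psi^k(y,v)=F(y,v)+\rho^k\,\Phi(y,v;y^k,v^k)+\rho^k\beta^k\|(y-y^k,v-v^k)\|_2^2.$$ Algorithm AMA: for $j=0,1,\dots$: (1) let $v^{k,j+1}$ be the (unique) minimizer of $\Psi^k(y^{k,j},\cdot)$ over $\mathcal V$; (2) let $y^{k,j+1}$ be a minimizer of $\Psi^k(\cdot,v^{k,j+1})$ over $\Upsilon_\tau$; (3) if $(y^{k,j+1},v^{k,j+1})$ is partially optimal, stop and return it. A point $(\bar y,\bar v)\in\Upsilon_\tau\times\mathcal V$ is partially optimal if $\Psi^k(\bar y,\bar v)\le\Psi^k(\bar y,v)$ for all $v\in\mathcal V$ and $\Psi^k(\bar y,\bar v)\le\Psi^k(y,\bar v)$ for all $y\in\Upsilon_\tau$. *)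

(* Defs.v *)
From Stdlib Require Import Reals.
From Coquelicot Require Import Coquelicot.
From mathcomp Require Import ssreflect ssrfun ssrbool eqtype ssrnat seq fintype bigop.

Set Implicit Arguments.
Unset Strict Implicit.
Unset Printing Implicit Defensive.

Local Open Scope R_scope.

Definition vec (n : nat) := 'I_n -> R.

Definition rsum (k : nat) (F : 'I_k -> R) : R := \big[Rplus/0]_(i < k) F i.

Definition dot (n : nat) (x y : vec n) : R := rsum (fun a => x a * y a).
Definition sqnorm (n : nat) (x : vec n) : R := rsum (fun a => x a ^ 2).
Definition vsub (n : nat) (x y : vec n) : vec n := fun a => x a - y a.

(** Feasible link flows V = { Δ h : h >= 0, Λ h = d }, with n links, m routes,
    p OD pairs; Δ, Λ are 0/1 matrices given as boolean incidence relations. *)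
Definition feasible_flows (n m p : nat) (Delta : 'I_n -> 'I_m -> bool)
  (Lambda : 'I_p -> 'I_m -> bool) (d : vec p) (v : vec n) : Prop :=
  exists h : vec m,
    (forall r, 0 <= h r) /\
    (forall w, rsum (fun r => if Lambda w r then h r else 0) = d w) /\
    (forall a, v a = rsum (fun r => if Delta a r then h r else 0)).

Definition box (n : nat) (u : vec n) (y : vec n) : Prop :=
  forall a, 0 <= y a <= u a.

Definition supp_card (n : nat) (y : vec n) : nat :=
  #|[pred a : 'I_n | if Rlt_dec 0 (y a) then true else false]|.

Definition Upsilon (n : nat) (u : vec n) (tau : nat) (y : vec n) : Prop :=
  box u y /\ (supp_card y <= tau)%N.

Definition dom2 (y v : R) : Prop := 0 <= y /\ 0 <= v.

Definition C1_on_2d (D : R -> R -> Prop) (h : R -> R -> R) : Prop :=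
  exists hy hv : R -> R -> R,
    forall y v, D y v ->
      differentiable_pt_lim h y v (hy y v) (hv y v) /\
      continuity_2d_pt hy y v /\ continuity_2d_pt hv y v.

Definition C1_on (D : R -> Prop) (g : R -> R) : Prop :=
  exists g' : R -> R,
    forall y, D y -> is_derive g y (g' y) /\ continuous g' y.

Definition convex_on_2d (D : R -> R -> Prop) (h : R -> R -> R) : Prop :=
  forall y1 v1 y2 v2 l, D y1 v1 -> D y2 v2 -> 0 <= l <= 1 ->
    h (l * y1 + (1 - l) * y2) (l * v1 + (1 - l) * v2)
      <= l * h y1 v1 + (1 - l) * h y2 v2.

Definition convex_on (D : R -> Prop) (g : R -> R) : Prop :=
  forall x1 x2 l, D x1 -> D x2 -> 0 <= l <= 1 ->
    g (l * x1 + (1 - l) * x2) <= l * g x1 + (1 - l) * g x2.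

(** Standing assumptions on the link travel time t_a and expansion cost G_a. *)
Definition link_assumptions (t : R -> R -> R) (G : R -> R) : Prop :=
  C1_on_2d dom2 t /\
  (forall y v1 v2, 0 <= y -> 0 <= v1 -> v1 < v2 -> t y v1 < t y v2) /\
  (forall y, 0 <= y -> 0 <= G y) /\
  C1_on (fun y => 0 <= y) G /\
  (forall y1 y2, 0 <= y1 -> y1 < y2 -> G y1 < G y2) /\
  convex_on (fun y => 0 <= y) G /\
  convex_on_2d dom2 (fun y v => RInt (fun w => t y w) 0 v) /\
  convex_on_2d dom2 (fun y v => t y v * v).

Definition Fobj (n : nat) (t : 'I_n -> R -> R -> R) (G : 'I_n -> R -> R)
  (eta : R) (y v : vec n) : R :=
  rsum (fun a => t a (y a) (v a) * v a) + eta * rsum (fun a => G a (y a)).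

Definition fobj (n : nat) (t : 'I_n -> R -> R -> R) (y v : vec n) : R :=
  rsum (fun a => RInt (fun w => t a (y a) w) 0 (v a)).

Definition is_min_value (n : nat) (S : vec n -> Prop) (phi : vec n -> R)
  (gval : R) : Prop :=
  (exists v, S v /\ phi v = gval) /\ (forall v, S v -> gval <= phi v).

Definition is_gradient_within (n : nat) (S : vec n -> Prop) (g : vec n -> R)
  (x c : vec n) : Prop :=
  forall eps, 0 < eps -> exists delta, 0 < delta /\
    forall y, S y -> sqrt (sqnorm (vsub y x)) < delta ->
      Rabs (g y - g x - dot c (vsub y x)) <= eps * sqrt (sqnorm (vsub y x)).

(** Φ(y,v; ȳ,v̄) = f(y,v) - g(ȳ) - ∇g(ȳ)ᵀ(y - ȳ), with [gradg] = ∇g(ȳ). *)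
Definition Phi (n : nat) (t : 'I_n -> R -> R -> R) (g : vec n -> R)
  (gradg : vec n) (y v ybar : vec n) : R :=
  fobj t y v - g ybar - dot gradg (vsub y ybar).

Definition Psi (n : nat) (t : 'I_n -> R -> R -> R) (G : 'I_n -> R -> R)
  (eta : R) (g : vec n -> R) (gradg : vec n) (rho beta : R) (yk vk : vec n)
  (y v : vec n) : R :=
  Fobj t G eta y v + rho * Phi t g gradg y v yk
  + rho * beta * (sqnorm (vsub y yk) + sqnorm (vsub v vk)).

Definition partially_optimal (n : nat) (Ups V : vec n -> Prop)
  (Psi : vec n -> vec n -> R) (ybar vbar : vec n) : Prop :=
  Ups ybar /\ V vbar /\
  (forall v, V v -> Psi ybar vbar <= Psi ybar v) /\
  (forall y, Ups y -> Psi ybar vbar <= Psi y vbar).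

Definition accumulation_point (n : nat) (ys vs : nat -> vec n)
  (ystar vstar : vec n) : Prop :=
  forall eps, 0 < eps -> forall N : nat, exists j : nat, (N <= j)%N /\
    sqrt (sqnorm (vsub (ys j) ystar) + sqnorm (vsub (vs j) vstar)) < eps.

(* Main.v *)
Require Import Defs.
From Stdlib Require Import Reals Lra Lia ClassicalEpsilon Classical.
From Coquelicot Require Import Coquelicot.
From mathcomp Require Import ssreflect ssrfun ssrbool eqtype ssrnat seq fintype bigop.
Local Open Scope R_scope.
From HB Require Import structures.

HB.instance Definition _ := Monoid.isComLaw.Build R 0 Rplus (fun a b c => esym (Rplus_assoc a b c)) Rplus_comm Rplus_0_l.

Lemma rsum_le (k : nat) (F H : 'I_k -> R) : (forall a, F a <= H a) -> rsum F <= rsum H.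
Proof. move=> h; rewrite /rsum; apply: (big_ind2 (fun x y => x <= y)) => //; [lra| move=> *; lra]. Qed.

Lemma rsum_ge0 (k : nat) (F : 'I_k -> R) : (forall a, 0 <= F a) -> 0 <= rsum F.
Proof. move=> h; rewrite /rsum; apply: (big_ind (fun x => 0 <= x)) => //; [lra| move=> *; lra]. Qed.

Lemma rsum_term (k : nat) (F : 'I_k -> R) a : (forall a, 0 <= F a) -> F a <= rsum F.
Proof.
move=> h; rewrite /rsum (bigD1 a) //=.
set X := bigop _ _ _.
have : 0 <= X.
  rewrite /X; apply: (big_ind (fun x => 0 <= x)) => //; [lra| move=> *; lra].
move=> ?; lra.
Qed.

Lemma rsum_lin (k : nat) (al be : R) (F H : 'I_k -> R) :
  rsum (fun a => al * F a + be * H a) = al * rsum F + be * rsum H.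
Proof.
elim: k F H => [|k IH] F H; rewrite /rsum.
  rewrite !big_ord0; ring.
rewrite !big_ord_recr /=.
have := IH (fun i => F (widen_ord (leqnSn k) i)) (fun i => H (widen_ord (leqnSn k) i)).
rewrite /rsum => ->. move: (bigop _ _ _) (bigop _ _ _) => X Y. rewrite /=. ring.
Qed.

Lemma rsum_ext (k : nat) (F H : 'I_k -> R) : (forall a, F a = H a) -> rsum F = rsum H.
Proof. move=> h; rewrite /rsum; apply: eq_bigr => i _; exact: h. Qed.

Lemma lim_rsum (k : nat) (F : nat -> 'I_k -> R) (L : 'I_k -> R) :
  (forall a, is_lim_seq (fun i => F i a) (L a)) ->
  is_lim_seq (fun i => rsum (F i)) (rsum L).
Proof.
elim: k F L => [|k IH] F L h; rewrite /rsum.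
  rewrite big_ord0. apply: is_lim_seq_ext (is_lim_seq_const 0) => i. by rewrite big_ord0.
rewrite big_ord_recr /=.
apply: (is_lim_seq_ext (fun i => \big[Rplus/0]_(i0 < k) F i (widen_ord (leqnSn k) i0) + F i ord_max)).
  by move=> i; rewrite big_ord_recr.
apply: is_lim_seq_plus'; last exact: h.
exact: (IH (fun i a => F i (widen_ord (leqnSn k) a))).
Qed.
Definition incr (phi : nat -> nat) := forall i, (phi i < phi (S i))%coq_nat.

Fixpoint sel_fun (s : nat -> nat -> nat) (i : nat) : nat :=
  match i with 0 => s 0%nat 0%nat | S i' => s (S (sel_fun s i')) (S i') end.

Lemma subseq_extract (D : nat -> R) :
  (forall eps, 0 < eps -> forall N, exists j, (N <= j)%N /\ D j < eps) ->
  exists phi, incr phi /\ forall i, D (phi i) < / INR (S i).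
Proof.
move=> H.
have sel : forall N i, {j | (N <= j)%N /\ D j < / INR (S i)}.
  move=> N i; apply: constructive_indefinite_description; apply: H.
  apply: Rinv_0_lt_compat; apply: lt_0_INR; lia.
pose s := fun N i => proj1_sig (sel N i).
have hs : forall N i, (N <= s N i)%coq_nat /\ D (s N i) < / INR (S i).
  move=> N i; rewrite /s; case: (proj2_sig (sel N i)) => /leP; done.
exists (sel_fun s); split.
  move=> i /=. have [? _] := hs (S (sel_fun s i)) (S i). lia.
case=> [|i] /=; [exact: (proj2 (hs _ _)) | exact: (proj2 (hs _ _))].
Qed.

Lemma lim_from_inv (x : nat -> R) (l : R) (c : nat -> R) :
  (forall i, Rabs (x i - l) <= c i) -> (forall i, c i < / INR (S i)) -> is_lim_seq x l.
Proof.
move=> h1 h2; apply/is_lim_seq_spec => eps.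
have [N [HN HN0]] := archimed_cor1 eps (cond_pos eps).
exists N => n Hn.
apply: (Rle_lt_trans _ _ _ (h1 n)); apply: (Rlt_trans _ _ _ (h2 n)).
apply: (Rle_lt_trans _ _ _ _ HN).
apply: Rinv_le_contravar; first by apply: lt_0_INR.
apply: le_INR; lia.
Qed.

Lemma incr_mono phi : incr phi -> forall a b, (a < b)%coq_nat -> (phi a < phi b)%coq_nat.
Proof.
move=> H a b; elim: b => [|b IH] Hab; first lia.
have := H b. case: (Nat.eq_dec a b) => [->|ne] //.
move=> ?; have := IH ltac:(lia); lia.
Qed.

Lemma incr_ge phi : incr phi -> forall i, (i <= phi i)%coq_nat.
Proof. move=> H; elim=> [|i IH]; [lia| have := H i; lia]. Qed.

Lemma incr_comp phi psi : incr phi -> incr psi -> incr (fun i => phi (psi i)).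
Proof. move=> H1 H2 i; apply: incr_mono => //; exact: H2. Qed.

Lemma lim_subseq u l phi : incr phi -> is_lim_seq u l -> is_lim_seq (fun i => u (phi i)) l.
Proof. move=> H; apply: is_lim_seq_subseq; apply: eventually_subseq; exact: H. Qed.

Lemma BW1 (u : nat -> R) (M : R) : (forall j, Rabs (u j) <= M) ->
  exists phi, incr phi /\ exists l : R, is_lim_seq (fun i => u (phi i)) l.
Proof.
move=> Hb.
have [l Hl] := Bolzano_Weierstrass u (fun c => -M <= c <= M) (compact_P3 (-M) M)
  (fun n => proj1 (Rabs_le_between _ _) (Hb n)).
have [phi [Hphi Hd]] : exists phi, incr phi /\ forall i, Rabs (u (phi i) - l) < / INR (S i).
  apply: (subseq_extract (fun j => Rabs (u j - l))) => eps Heps N.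
  have Hn : neighbourhood (fun x => Rabs (x - l) < eps) l.
    by exists (mkposreal eps Heps) => y; rewrite /disc /=.
  have [p [Hp Hv]] := Hl (fun x => Rabs (x - l) < eps) N Hn.
  by exists p; split => //; apply/leP.
exists phi; split => //; exists l.
apply: (lim_from_inv _ _ (fun i => Rabs (u (phi i) - l))) => // i; lra.
Qed.

Lemma BW_list (I : eqType) (l : seq I) (x : I -> nat -> R) (M : I -> R) :
  (forall a j, Rabs (x a j) <= M a) ->
  exists phi, incr phi /\ forall a, a \in l -> exists L : R, is_lim_seq (fun i => x a (phi i)) L.
Proof.
move=> Hb; elim: l => [|b l [phi [Hphi IH]]].
  by exists id; split => // i /=; lia.
have [psi [Hpsi [L HL]]] := BW1 (fun i => x b (phi i)) (M b) (fun j => Hb b (phi j)).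
exists (fun i => phi (psi i)); split; first exact: incr_comp.
move=> a; rewrite in_cons => /orP [/eqP -> | Ha]; first by exists L.
have [L' HL'] := IH a Ha; exists L'.
exact: (lim_subseq (fun i => x a (phi i))).
Qed.
Lemma seq_cont1 (f : R -> R) x (a : nat -> R) :
  continuous f x -> is_lim_seq a x -> is_lim_seq (fun i => f (a i)) (f x).
Proof. move=> Hf Ha; exact: (filterlim_comp _ _ _ a f eventually (locally x) _ Ha Hf). Qed.

Lemma seq_cont2 (f : R -> R -> R) x y (a b : nat -> R) :
  continuity_2d_pt f x y -> is_lim_seq a x -> is_lim_seq b y ->
  is_lim_seq (fun i => f (a i) (b i)) (f x y).
Proof.
move=> Hf /is_lim_seq_spec Ha /is_lim_seq_spec Hb; apply/is_lim_seq_spec => eps.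
have [d Hd] := Hf eps.
eapply filter_imp; last exact: (filter_and _ _ (Ha d) (Hb d)).
move=> i [h1 h2]; exact: Hd.
Qed.

Lemma cont2_slice (f : R -> R -> R) y w :
  continuity_2d_pt f y w -> continuous (f y) w.
Proof.
move=> Hf; apply/filterlim_locally => eps.
have [d Hd] := Hf eps.
exists d => z Hz.
have := Hd y z; rewrite Rminus_eq_0 Rabs_R0 => H.
apply: H; first exact: cond_pos.
exact: Hz.
Qed.

Lemma lim_RInt (T : R -> R -> R)
  (HT : forall y w, 0 <= y -> 0 <= w -> continuity_2d_pt T y w)
  (a b : nat -> R) (ys vs : R) :
  (forall i, 0 <= a i) -> (forall i, 0 <= b i) -> is_lim_seq a ys -> is_lim_seq b vs ->
  is_lim_seq (fun i => RInt (fun w => T (a i) w) 0 (b i)) (RInt (fun w => T ys w) 0 vs).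
Proof.
move=> Ha0 Hb0 Ha Hb.
have ys0 : 0 <= ys.
  have HH := is_lim_seq_le (fun _ => 0) a 0 ys Ha0 (is_lim_seq_const 0) Ha; exact HH.
have vs0 : 0 <= vs.
  have HH := is_lim_seq_le (fun _ => 0) b 0 vs Hb0 (is_lim_seq_const 0) Hb; exact HH.
have exint : forall y c1 c2, 0 <= y -> 0 <= c1 -> 0 <= c2 -> ex_RInt (fun w => T y w) c1 c2.
  move=> y c1 c2 Hy H1 H2; apply: ex_RInt_continuous => z Hz.
  apply: cont2_slice; apply: HT => //.
  have : 0 <= Rmin c1 c2 by apply: Rmin_glb.
  lra.
pose B := vs + 1.
have [Mx [HMx HMxB]] : exists Mx, (forall c, 0 <= c <= B -> Rabs (T ys c) <= Rabs (T ys Mx)) /\ 0 <= Mx <= B.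
  apply: (continuity_ab_maj (fun c => Rabs (T ys c))); first by rewrite /B; lra.
  move=> c Hc; apply/continuity_pt_filterlim.
  apply: (continuous_Rabs_comp (T ys)); apply: cont2_slice; apply: HT; lra.
set Mb := Rabs (T ys Mx).
have Mb0 : 0 <= Mb by apply: Rabs_pos.
apply/is_lim_seq_spec => eps.
have eps0 := cond_pos eps.
have eps1p : 0 < eps / (2 * (B + 1)) by apply: Rdiv_lt_0_compat; rewrite /B; lra.
have [dl Hdl] := uniform_continuity_2d_1d' T 0 B ys
   (fun x Hx => HT ys x ys0 (proj1 Hx)) (mkposreal _ eps1p).
have d2p : 0 < Rmin 1 (eps / (2 * (Mb + 1))).
  apply: Rmin_pos; first lra. apply: Rdiv_lt_0_compat; lra.
move/is_lim_seq_spec: Ha => Ha. move/is_lim_seq_spec: Hb => Hb.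
eapply filter_imp; last exact: (filter_and _ _ (Ha dl) (Hb (mkposreal _ d2p))).
move=> i /= [h1 h2].
have hb1 : Rabs (b i - vs) < 1 by apply: (Rlt_le_trans _ _ _ h2); apply: Rmin_l.
have hb2 : Rabs (b i - vs) < eps / (2 * (Mb + 1)) by apply: (Rlt_le_trans _ _ _ h2); apply: Rmin_r.
have Hsplit : RInt (fun w => T (a i) w) 0 (b i) - RInt (fun w => T ys w) 0 vs =
   RInt (fun w => T (a i) w - T ys w) 0 (b i) + RInt (fun w => T ys w) vs (b i).
  have E1 := RInt_minus (fun w => T (a i) w) (fun w => T ys w) 0 (b i)
               (exint _ _ _ (Ha0 i) (Rle_refl 0) (Hb0 i)) (exint _ _ _ ys0 (Rle_refl 0) (Hb0 i)).
  have E2 := RInt_Chasles (fun w => T ys w) 0 vs (b i)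
               (exint _ _ _ ys0 (Rle_refl 0) vs0) (exint _ _ _ ys0 vs0 (Hb0 i)).
  rewrite /minus /plus /opp /= in E1 E2.
  rewrite E1 -E2; ring.
rewrite Hsplit.
have I1 : Rabs (RInt (fun w => T (a i) w - T ys w) 0 (b i)) <= (b i - 0) * (eps / (2 * (B + 1))).
  apply: abs_RInt_le_const; first exact: Hb0.
    apply: (ex_RInt_minus (fun w => T (a i) w) (fun w => T ys w)); apply: exint => //; lra.
  move=> w Hw; apply: Rlt_le.
  have Hb' : b i <= B by move: hb1; rewrite /B => /Rabs_lt_between'; lra.
  have h1' : ys - dl <= a i <= ys + dl by move: h1 => /Rabs_lt_between'; lra.
  have hw : Rabs (w - w) < dl by replace (w - w) with 0 by ring; rewrite Rabs_R0; exact: cond_pos.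
  have := Hdl w ys w (a i) ltac:(lra) ltac:(lra) ltac:(lra) h1' hw. done.
have I2 : Rabs (RInt (fun w => T ys w) vs (b i)) <= Rabs (b i - vs) * Mb.
  case: (Rle_lt_dec vs (b i)) => Hc.
    rewrite (Rabs_right (b i - vs)); last lra.
    apply: abs_RInt_le_const => //; first exact: exint.
    move=> w Hw; apply: HMx; rewrite /B; move: hb1 => /Rabs_lt_between'; lra.
  rewrite -opp_RInt_swap; last exact: exint.
  rewrite /opp /= Rabs_Ropp (Rabs_left (b i - vs)); last lra.
  have -> : - (b i - vs) = vs - b i by ring.
  apply: abs_RInt_le_const; [lra | exact: exint |].
  move=> w Hw; apply: HMx; rewrite /B; have := Hb0 i; lra.
have Hb'' : b i <= B by move: hb1; rewrite /B => /Rabs_lt_between'; lra.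
have K1 : (b i - 0) * (eps / (2 * (B + 1))) < eps / 2.
  have E : eps / (2 * (B + 1)) * (2 * (B + 1)) = eps by field; rewrite /B; lra.
  have e1p := eps1p; move: E e1p; set e1 := eps / (2 * (B + 1)) => E ?.
  have : b i < B + 1 by lra.
  nra.
have K2 : Rabs (b i - vs) * Mb < eps / 2.
  have E : eps / (2 * (Mb + 1)) * (2 * (Mb + 1)) = eps by field; lra.
  move: E hb2; set e2 := eps / (2 * (Mb + 1)) => E ?.
  have := Rabs_pos (b i - vs).
  nra.
apply: (Rle_lt_trans _ _ _ (Rabs_triang _ _)); lra.
Qed.
Lemma lim_nonneg (a : nat -> R) (l : R) : (forall i, 0 <= a i) -> is_lim_seq a l -> 0 <= l.
Proof. move=> H1 H2; have HH := is_lim_seq_le (fun _ => 0) a 0 l H1 (is_lim_seq_const 0) H2; exact HH. Qed.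

Lemma Psi_lim (n : nat) (t : 'I_n -> R -> R -> R) (G : 'I_n -> R -> R) eta g gradg rho beta yk vk
  (Hc : forall a y w, 0 <= y -> 0 <= w -> continuity_2d_pt (t a) y w)
  (HG : forall a y, 0 <= y -> continuous (G a) y)
  (yq vq : nat -> vec n) (ys vs : vec n) :
  (forall i a, 0 <= yq i a) -> (forall i a, 0 <= vq i a) ->
  (forall a, is_lim_seq (fun i => yq i a) (ys a)) ->
  (forall a, is_lim_seq (fun i => vq i a) (vs a)) ->
  is_lim_seq (fun i => Psi t G eta g gradg rho beta yk vk (yq i) (vq i))
    (Psi t G eta g gradg rho beta yk vk ys vs).
Proof.
move=> Hy0 Hv0 Hy Hv.
have ys0 : forall a, 0 <= ys a by move=> a; apply: (lim_nonneg _ _ (fun i => Hy0 i a) (Hy a)).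
have vs0 : forall a, 0 <= vs a by move=> a; apply: (lim_nonneg _ _ (fun i => Hv0 i a) (Hv a)).
rewrite /Psi /Fobj /Phi /fobj /dot /sqnorm /vsub.
apply: is_lim_seq_plus'; [apply: is_lim_seq_plus'|].
- apply: is_lim_seq_plus'.
  + apply: lim_rsum => a; apply: (seq_cont2 (fun y w => t a y w * w)); last by apply: Hv.
      apply: continuity_2d_pt_mult; [exact: Hc | exact: continuity_2d_pt_id2].
    exact: Hy.
  + apply: is_lim_seq_mult'; first exact: is_lim_seq_const.
    apply: lim_rsum => a; apply: seq_cont1; [exact: HG | exact: Hy].
- apply: is_lim_seq_mult'; first exact: is_lim_seq_const.
  apply: is_lim_seq_minus'; [apply: is_lim_seq_minus'|].
  + apply: lim_rsum => a.
    exact: (lim_RInt (t a) (Hc a) _ _ _ _ (fun i => Hy0 i a) (fun i => Hv0 i a) (Hy a) (Hv a)).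
  + exact: is_lim_seq_const.
  + apply: lim_rsum => a; apply: is_lim_seq_mult'; first exact: is_lim_seq_const.
    apply: is_lim_seq_minus'; [exact: Hy | exact: is_lim_seq_const].
- apply: is_lim_seq_mult'; first exact: is_lim_seq_const.
  apply: is_lim_seq_plus'; apply: lim_rsum => a; rewrite /pow;
  (apply: is_lim_seq_mult'; [|apply: is_lim_seq_mult'; [|exact: is_lim_seq_const]]);
  apply: is_lim_seq_minus'; (try exact: is_lim_seq_const); [exact: Hy|exact: Hy|exact: Hv|exact: Hv].
Qed.
Lemma rsum_add (k : nat) (F H : 'I_k -> R) : rsum (fun a => F a + H a) = rsum F + rsum H.
Proof. rewrite -(Rmult_1_l (rsum F)) -(Rmult_1_l (rsum H)) -rsum_lin; apply: rsum_ext => a; ring. Qed.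

Lemma rsum_scal (k : nat) c (F : 'I_k -> R) : rsum (fun a => c * F a) = c * rsum F.
Proof.
have := @rsum_lin k c 0 F F; rewrite Rmult_0_l Rplus_0_r => <-; apply: rsum_ext => a; ring.
Qed.

Lemma half_convex2 (h : R -> R -> R) : convex_on_2d dom2 h ->
  forall y w1 w2, 0 <= y -> 0 <= w1 -> 0 <= w2 ->
  h y (/2 * w1 + /2 * w2) <= /2 * h y w1 + /2 * h y w2.
Proof.
move=> H y w1 w2 Hy H1 H2.
have := H y w1 y w2 (/2) (conj Hy H1) (conj Hy H2) ltac:(lra).
have E1 : /2 * y + (1 - /2) * y = y by field.
have E2 : 1 - /2 = /2 by field.
by rewrite E1 E2.
Qed.

Arguments half_convex2 {h}.

Lemma V_nonneg n m p Delta Lambda d (v : vec n) :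
  @feasible_flows n m p Delta Lambda d v -> forall a, 0 <= v a.
Proof.
move=> [h [H0 [_ Hv]]] a; rewrite Hv; apply: rsum_ge0 => r; case: (Delta a r) => //; lra.
Qed.

Lemma V_mid n m p Delta Lambda d (v w : vec n) :
  @feasible_flows n m p Delta Lambda d v -> @feasible_flows n m p Delta Lambda d w ->
  @feasible_flows n m p Delta Lambda d (fun a => /2 * v a + /2 * w a).
Proof.
move=> [h1 [H10 [H1L H1v]]] [h2 [H20 [H2L H2v]]].
exists (fun r => /2 * h1 r + /2 * h2 r); split; [|split].
- move=> r; have := H10 r; have := H20 r; lra.
- move=> o.
  transitivity (/2 * rsum (fun r => if Lambda o r then h1 r else 0) + /2 * rsum (fun r => if Lambda o r then h2 r else 0)); last by rewrite H1L H2L; field.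
  rewrite -rsum_lin; apply: rsum_ext => r.
  case: (Lambda o r); ring.
- move=> a; rewrite H1v H2v -rsum_lin; apply: rsum_ext => r.
  case: (Delta a r); ring.
Qed.

Arguments V_mid {n m p Delta Lambda d v w}.
Arguments V_nonneg {n m p Delta Lambda d v}.

Definition qf n (t : 'I_n -> R -> R -> R) rho beta (vk : vec n) a y w :=
  t a y w * w + rho * RInt (fun w0 => t a y w0) 0 w + rho * beta * ((w - vk a) ^ 2).
Arguments qf {n}.

Lemma Psi_decomp (n : nat) (t : 'I_n -> R -> R -> R) (G : 'I_n -> R -> R) eta g gradg rho beta yk vk
  (y v : vec n) :
  Psi t G eta g gradg rho beta yk vk y v =
  (eta * rsum (fun a => G a (y a)) + rho * (- g yk - dot gradg (vsub y yk))
   + rho * beta * sqnorm (vsub y yk)) + rsum (fun a => qf t rho beta vk a (y a) (v a)).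
Proof.
rewrite /qf !rsum_add !rsum_scal /Psi /Fobj /Phi /fobj /sqnorm /vsub; ring.
Qed.

Lemma Psi_sc (n m p : nat) Delta Lambda d
  (t : 'I_n -> R -> R -> R) (G : 'I_n -> R -> R) eta g gradg rho beta yk vk
  (Hconv : forall a, convex_on_2d dom2 (fun y v => RInt (fun w => t a y w) 0 v) /\
                     convex_on_2d dom2 (fun y v => t a y v * v))
  (Hrho : 0 < rho) (Hbeta : 0 < beta) (y v mm : vec n) :
  (forall a, 0 <= y a) -> @feasible_flows n m p Delta Lambda d v ->
  @feasible_flows n m p Delta Lambda d mm ->
  (forall w, @feasible_flows n m p Delta Lambda d w ->
     Psi t G eta g gradg rho beta yk vk y mm <= Psi t G eta g gradg rho beta yk vk y w) ->
  rho * beta / 2 * sqnorm (vsub v mm) <=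
    Psi t G eta g gradg rho beta yk vk y v - Psi t G eta g gradg rho beta yk vk y mm.
Proof.
move=> Hy Hv Hm Hmin.
have Hz := V_mid Hv Hm.
have := Hmin _ Hz.
rewrite !Psi_decomp.
have Hq : rsum (fun a => qf t rho beta vk a (y a) (/2 * v a + /2 * mm a)) <=
   /2 * rsum (fun a => qf t rho beta vk a (y a) (v a)) + /2 * rsum (fun a => qf t rho beta vk a (y a) (mm a))
   + (- (rho * beta / 4)) * sqnorm (vsub v mm).
  rewrite -[/2 * rsum _ + /2 * rsum _]rsum_lin /sqnorm -rsum_scal -rsum_add.
  apply: rsum_le => a.
  have v0 := V_nonneg Hv a. have m0 := V_nonneg Hm a.
  have [Hc1 Hc2] := Hconv a.
  have K1 := half_convex2 Hc1 _ _ _ (Hy a) v0 m0.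
  have K2 := half_convex2 Hc2 _ _ _ (Hy a) v0 m0.
  rewrite /qf /vsub /=.
  have K1' := Rmult_le_compat_l rho _ _ (Rlt_le _ _ Hrho) K1.
  nra.
move: Hq.
move=> Hq Hmin'. lra.
Qed.
Lemma lim_fun (I : Type) (x : I -> nat -> R) :
  (forall a, exists L : R, is_lim_seq (x a) L) -> exists Lf : I -> R, forall a, is_lim_seq (x a) (Lf a).
Proof.
move=> H; exists (fun a => proj1_sig (constructive_indefinite_description _ (H a))).
move=> a; exact: (proj2_sig (constructive_indefinite_description _ (H a))).
Qed.

Lemma BW_fin (I : finType) (x : I -> nat -> R) (M : I -> R) :
  (forall a j, Rabs (x a j) <= M a) ->
  exists phi, incr phi /\ exists Lf : I -> R, forall a, is_lim_seq (fun i => x a (phi i)) (Lf a).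
Proof.
move=> Hb; have [phi [Hphi H]] := @BW_list I (enum I) x M Hb.
exists phi; split => //; apply: lim_fun => a; apply: H; by rewrite mem_enum.
Qed.

Lemma eventually_all (I : finType) (P : I -> nat -> Prop) :
  (forall a, eventually (P a)) -> eventually (fun i => forall a, P a i).
Proof.
move=> H.
suff : forall l : seq I, eventually (fun i => forall a, a \in l -> P a i).
  move=> /(_ (enum I)); apply: filter_imp => i Hi a; apply: Hi; by rewrite mem_enum.
elim=> [|b l IH]; first by exists 0%nat.
eapply filter_imp; last exact: (filter_and _ _ (H b) IH).
move=> i [h1 h2] a; rewrite in_cons => /orP [/eqP -> //| Ha]; exact: h2.
Qed.

Lemma h_bound m p (Lambda : 'I_p -> 'I_m -> bool) (d : vec p)
  (HLr : forall r : 'I_m, exists! w : 'I_p, Lambda w r = true) (Hd : forall w, 0 < d w)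
  (h : vec m) :
  (forall r, 0 <= h r) -> (forall w, rsum (fun r => if Lambda w r then h r else 0) = d w) ->
  forall r, Rabs (h r) <= rsum d.
Proof.
move=> H0 HL r; rewrite Rabs_right; last by have := H0 r; lra.
have [w [Hw _]] := HLr r.
apply: (Rle_trans _ (d w)); last by apply: rsum_term => w'; have := Hd w'; lra.
rewrite -HL.
have := @rsum_term m (fun r0 => if Lambda w r0 then h r0 else 0) r.
rewrite Hw; apply => r0; case: (Lambda w r0) => //; lra.
Qed.

Arguments h_bound {m p Lambda d} HLr Hd {h}.

Lemma V_bound n m p (Delta : 'I_n -> 'I_m -> bool) (Lambda : 'I_p -> 'I_m -> bool) (d : vec p)
  (HLr : forall r : 'I_m, exists! w : 'I_p, Lambda w r = true) (Hd : forall w, 0 < d w)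
  (v : vec n) :
  feasible_flows Delta Lambda d v -> forall a, Rabs (v a) <= rsum (fun _ : 'I_m => rsum d).
Proof.
move=> [h [H0 [HL Hv]]] a.
have Hb := h_bound HLr Hd H0 HL.
rewrite Hv Rabs_right; last by apply: Rle_ge; apply: rsum_ge0 => r; case: (Delta a r) => //; lra.
apply: rsum_le => r; have := proj1 (Rabs_le_between _ _) (Hb r) => ?.
case: (Delta a r); lra.
Qed.

Arguments V_bound {n m p Delta Lambda d} HLr Hd {v}.

Lemma lim_uniq (u : nat -> R) (l1 l2 : R) : is_lim_seq u l1 -> is_lim_seq u l2 -> l1 = l2.
Proof.
move=> H1 H2; have E1 := is_lim_seq_unique _ _ H1; have E2 := is_lim_seq_unique _ _ H2.
rewrite E1 in E2; by case: E2.
Qed.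

Lemma V_closed n m p (Delta : 'I_n -> 'I_m -> bool) (Lambda : 'I_p -> 'I_m -> bool) (d : vec p)
  (HLr : forall r : 'I_m, exists! w : 'I_p, Lambda w r = true) (Hd : forall w, 0 < d w)
  (vq : nat -> vec n) (vs : vec n) :
  (forall i, feasible_flows Delta Lambda d (vq i)) ->
  (forall a, is_lim_seq (fun i => vq i a) (vs a)) ->
  feasible_flows Delta Lambda d vs.
Proof.
move=> HV Hl.
pose hq := fun i => proj1_sig (constructive_indefinite_description _ (HV i)).
have Hh : forall i, (forall r, 0 <= hq i r) /\
    (forall w, rsum (fun r => if Lambda w r then hq i r else 0) = d w) /\
    (forall a, vq i a = rsum (fun r => if Delta a r then hq i r else 0)).
  move=> i; exact: (proj2_sig (constructive_indefinite_description _ (HV i))).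
have [phi [Hphi [hs Hhs]]] := @BW_fin 'I_m (fun r i => hq i r) (fun _ => rsum d)
  (fun r i => h_bound HLr Hd (proj1 (Hh i)) (proj1 (proj2 (Hh i))) r).
exists hs; split; [|split].
- move=> r; apply: (lim_nonneg _ _ _ (Hhs r)) => i; exact: (proj1 (Hh _)).
- move=> w.
  have L1 : is_lim_seq (fun i => rsum (fun r => if Lambda w r then hq (phi i) r else 0))
                       (rsum (fun r => if Lambda w r then hs r else 0)).
    apply: lim_rsum => r; case: (Lambda w r); [exact: Hhs | exact: is_lim_seq_const].
  apply: (lim_uniq _ _ _ L1); apply: (is_lim_seq_ext (fun _ => d w)); last exact: is_lim_seq_const.
  move=> i; by rewrite (proj1 (proj2 (Hh _))).
- move=> a.
  have L1 : is_lim_seq (fun i => rsum (fun r => if Delta a r then hq (phi i) r else 0))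
                       (rsum (fun r => if Delta a r then hs r else 0)).
    apply: lim_rsum => r; case: (Delta a r); [exact: Hhs | exact: is_lim_seq_const].
  apply: (lim_uniq _ _ _ _ L1).
  apply: (is_lim_seq_ext (fun i => vq (phi i) a)); first by move=> i; rewrite (proj2 (proj2 (Hh _))).
  exact: (lim_subseq (fun i => vq i a)).
Qed.

Lemma Ups_closed n (u : vec n) tau (yq : nat -> vec n) (ys : vec n) :
  (forall i, Upsilon u tau (yq i)) ->
  (forall a, is_lim_seq (fun i => yq i a) (ys a)) ->
  Upsilon u tau ys.
Proof.
move=> HU Hl; split.
  move=> a; split.
    apply: (lim_nonneg _ _ _ (Hl a)) => i; exact: (proj1 ((proj1 (HU i)) a)).
  have HH := is_lim_seq_le _ (fun _ => u a) (ys a) (u a)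
     (fun i => proj2 ((proj1 (HU i)) a)) (Hl a) (is_lim_seq_const _); exact HH.
have Hev : eventually (fun i => forall a, 0 < ys a -> 0 < yq i a).
  apply: eventually_all => a.
  case: (Rlt_dec 0 (ys a)) => Ha; last by exists 0%nat => i _ H; contradiction.
  move/is_lim_seq_spec: (Hl a) => /(_ (mkposreal _ Ha)).
  apply: filter_imp => i /= /Rabs_lt_between' H _; lra.
case: Hev => N HN.
apply: (leq_trans _ (proj2 (HU N))).
rewrite /supp_card; apply: subset_leq_card; apply/subsetP => a.
rewrite !inE; case: (Rlt_dec 0 (ys a)) => // Ha _.
case: (Rlt_dec 0 (yq N a)) => // Hn; exfalso; apply: Hn; apply: (HN N (Nat.le_refl N)) => //.
Qed.
Lemma sqnorm_ge0 n (x : vec n) : 0 <= sqnorm x.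
Proof. apply: rsum_ge0 => a; exact: pow2_ge_0. Qed.

Arguments sqnorm_ge0 {n}.

Lemma coord_le n (x z : vec n) a : Rabs (x a) <= sqrt (sqnorm x + sqnorm z).
Proof.
rewrite -sqrt_Rsqr_abs; apply: sqrt_le_1_alt; rewrite Rsqr_pow2.
have := sqnorm_ge0 z; have := @rsum_term n (fun a => x a ^ 2) a (fun a => pow2_ge_0 _).
rewrite /sqnorm; lra.
Qed.

Arguments coord_le {n}.

Lemma rsum_const k c : rsum (fun _ : 'I_k => c) = INR k * c.
Proof.
elim: k => [|k IH]; rewrite /rsum; first by rewrite big_ord0 /=; ring.
rewrite big_ord_recr S_INR; move: IH; rewrite /rsum => ->; rewrite /=; ring.
Qed.

Lemma acc_to_subseq n (ys vs : nat -> vec n) (ystar vstar : vec n) :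
  accumulation_point ys vs ystar vstar ->
  exists phi, incr phi /\ (forall a, is_lim_seq (fun i => ys (phi i) a) (ystar a)) /\
                          (forall a, is_lim_seq (fun i => vs (phi i) a) (vstar a)).
Proof.
move=> H.
have [phi [Hphi HD]] := subseq_extract (fun j => sqrt (sqnorm (vsub (ys j) ystar) + sqnorm (vsub (vs j) vstar))) H.
exists phi; split => //; split => a.
  apply: (lim_from_inv _ _ _ _ HD) => i.
  exact: (coord_le (vsub (ys (phi i)) ystar) (vsub (vs (phi i)) vstar) a).
apply: (lim_from_inv _ _ _ _ HD) => i.
rewrite Rplus_comm; exact: (coord_le (vsub (vs (phi i)) vstar) (vsub (ys (phi i)) ystar) a).
Qed.

Lemma sqnorm_small n (x : vec n) dl : (forall a, Rabs (x a) < dl) -> sqnorm x <= INR n * dl ^ 2.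
Proof.
move=> H; rewrite -rsum_const; apply: rsum_le => a.
have := H a; have := Rabs_pos (x a); rewrite -(pow2_abs (x a)); nra.
Qed.

Arguments sqnorm_small {n x dl}.

Lemma subseq_to_acc n (ys vs : nat -> vec n) (ystar vstar : vec n) phi :
  incr phi -> (forall a, is_lim_seq (fun i => ys (phi i) a) (ystar a)) ->
  (forall a, is_lim_seq (fun i => vs (phi i) a) (vstar a)) ->
  accumulation_point ys vs ystar vstar.
Proof.
move=> Hphi Hy Hv eps Heps N.
have Hn := pos_INR n.
have dlp : 0 < eps / (2 * (INR n + 1)) by apply: Rdiv_lt_0_compat; lra.
set dl := eps / (2 * (INR n + 1)) in dlp.
have Edl : dl * (2 * (INR n + 1)) = eps by rewrite /dl; field; lra.
have [N0 HN0] : eventually (fun i => forall a,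
     Rabs (ys (phi i) a - ystar a) < dl /\ Rabs (vs (phi i) a - vstar a) < dl).
  apply: (@eventually_all ('I_n)) => a.
  have Y0 := proj2 (is_lim_seq_spec _ _) (Hy a); unfold is_lim_seq' in Y0; simpl in Y0; have Y := Y0 (mkposreal _ dlp).
  have V0 := proj2 (is_lim_seq_spec _ _) (Hv a); unfold is_lim_seq' in V0; simpl in V0; have V := V0 (mkposreal _ dlp).
  exact: (filter_and _ _ Y V).
pose i := Nat.max N N0.
exists (phi i); split.
  apply/leP; have := @incr_ge phi Hphi i; rewrite /i; lia.
have [H1 H2] : (forall a, Rabs (vsub (ys (phi i)) ystar a) < dl) /\
               (forall a, Rabs (vsub (vs (phi i)) vstar a) < dl).
  split => a; have := HN0 i ltac:(rewrite /i; lia); move=> /(_ a) [? ?]; rewrite /vsub; done.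
have S1 := sqnorm_small H1. have S2 := sqnorm_small H2.
have S0 := sqnorm_ge0 (vsub (ys (phi i)) ystar).
have S0' := sqnorm_ge0 (vsub (vs (phi i)) vstar).
rewrite -(sqrt_pow2 eps); last lra.
apply: sqrt_lt_1_alt; split; first lra.
have : 2 * INR n * dl ^ 2 < eps ^ 2.
  rewrite -Edl; nra.
lra.
Qed.

Arguments Psi_lim {n t G eta g gradg rho beta yk vk} Hc HG yq vq {ys vs}.
Arguments Psi_sc {n m p Delta Lambda d t G eta g gradg rho beta yk vk} Hconv Hrho Hbeta y v mm.
Arguments acc_to_subseq {n ys vs ystar vstar}.
Arguments subseq_to_acc {n} ys vs ystar vstar phi.
Arguments Ups_closed {n u tau} yq {ys}.
Arguments V_closed {n m p Delta Lambda d} HLr Hd vq {vs}.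

Theorem theorem4p1
  (n m p : nat)
  (Delta : 'I_n -> 'I_m -> bool) (Lambda : 'I_p -> 'I_m -> bool) (d : vec p)
  (HLr : forall r : 'I_m, exists! w : 'I_p, Lambda w r = true)
  (HLw : forall w : 'I_p, exists r : 'I_m, Lambda w r = true)
  (Hd : forall w, 0 < d w)
  (u : vec n) (Hu : forall a, 0 <= u a)
  (tau : nat) (Htau : (1 <= tau <= n)%N)
  (t : 'I_n -> R -> R -> R) (G : 'I_n -> R -> R)
  (Hlink : forall a, link_assumptions (t a) (G a))
  (eta : R) (Heta : 0 < eta)
  (g : vec n -> R)
  (Hg : forall y, box u y ->
          is_min_value (feasible_flows Delta Lambda d) (fun v => fobj t y v) (g y))
  (rho beta : R) (Hrho : 0 < rho) (Hbeta : 0 < beta)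
  (yk vk : vec n)
  (Hyk : Upsilon u tau yk) (Hvk : feasible_flows Delta Lambda d vk)
  (gradg : vec n) (Hgrad : is_gradient_within (box u) g yk gradg)
  (y0 : vec n) (Hy0 : Upsilon u tau y0)
  (ys vs : nat -> vec n)
  (Hys0 : ys 0%N = y0)
  (Hvstep : forall j : nat,
     feasible_flows Delta Lambda d (vs j.+1) /\
     forall v, feasible_flows Delta Lambda d v ->
       Psi t G eta g gradg rho beta yk vk (ys j) (vs j.+1)
       <= Psi t G eta g gradg rho beta yk vk (ys j) v)
  (Hystep : forall j : nat,
     Upsilon u tau (ys j.+1) /\
     forall y, Upsilon u tau y ->
       Psi t G eta g gradg rho beta yk vk (ys j.+1) (vs j.+1)
       <= Psi t G eta g gradg rho beta yk vk y (vs j.+1))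
  (Hnostop : forall j : nat,
     ~ partially_optimal (Upsilon u tau) (feasible_flows Delta Lambda d)
         (Psi t G eta g gradg rho beta yk vk) (ys j.+1) (vs j.+1)) :
  (* (i) *)
  ((forall j : nat,
      Psi t G eta g gradg rho beta yk vk (ys j.+2) (vs j.+2)
      < Psi t G eta g gradg rho beta yk vk (ys j.+1) (vs j.+1)) /\
   exists L : R,
     is_lim_seq (fun j : nat => Psi t G eta g gradg rho beta yk vk (ys j.+1) (vs j.+1))
                (Coquelicot.Rbar.Finite L)) /\
  (* (ii) *)
  (exists ystar vstar : vec n,
     accumulation_point (fun j => ys j.+1) (fun j => vs j.+1) ystar vstar) /\
  (* (iii) *)
  (forall ystar vstar : vec n,
     accumulation_point (fun j => ys j.+1) (fun j => vs j.+1) ystar vstar ->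
     partially_optimal (Upsilon u tau) (feasible_flows Delta Lambda d)
       (Psi t G eta g gradg rho beta yk vk) ystar vstar).
Proof.
set P := Psi t G eta g gradg rho beta yk vk.
have Hc : forall a y w, 0 <= y -> 0 <= w -> continuity_2d_pt (t a) y w.
  move=> a y w Hy Hw; case: (Hlink a) => [[hy [hv Ht]] _].
  have [Hdf _] := Ht y w (conj Hy Hw).
  apply: differentiable_continuity_pt; exists (hy y w), (hv y w); exact Hdf.
have HG : forall a y, 0 <= y -> continuous (G a) y.
  move=> a y Hy; case: (Hlink a) => [_ [_ [_ [[g' Hg'] _]]]].
  apply: ex_derive_continuous; exists (g' y); exact: (proj1 (Hg' y Hy)).
have Hconv : forall a, convex_on_2d dom2 (fun y v => RInt (fun w => t a y w) 0 v) /\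
                       convex_on_2d dom2 (fun y v => t a y v * v).
  move=> a; case: (Hlink a) => [_ [_ [_ [_ [_ [_ [H7 H8]]]]]]]; by split.
have HU : forall j, Upsilon u tau (ys j.+1) := fun j => proj1 (Hystep j).
have HV : forall j, feasible_flows Delta Lambda d (vs j.+1) := fun j => proj1 (Hvstep j).
have Hyp0 : forall j a, 0 <= ys j.+1 a by move=> j a; exact: (proj1 ((proj1 (HU j)) a)).
have Hvp0 : forall j a, 0 <= vs j.+1 a by move=> j a; exact: (V_nonneg (HV j) a).
have Hdec : forall j, P (ys j.+2) (vs j.+2) < P (ys j.+1) (vs j.+1).
  move=> j.
  have [v [Hv Hlt]] : exists v, feasible_flows Delta Lambda d v /\ P (ys j.+1) v < P (ys j.+1) (vs j.+1).
    apply: NNPP => Hne; apply: (Hnostop j); split; first exact: HU.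
    split; first exact: HV.
    split; last exact: (proj2 (Hystep j)).
    move=> v Hv; apply: Rnot_lt_le => Hlt; apply: Hne; by exists v.
  have := proj2 (Hvstep j.+1) v Hv. have := proj2 (Hystep j.+1) (ys j.+1) (HU j).
  move: Hlt; rewrite /P; lra.
pose x := fun (s : ('I_n + 'I_n)%type) (j : nat) =>
  match s with inl a => ys j.+1 a | inr a => vs j.+1 a end.
pose M := fun (s : ('I_n + 'I_n)%type) =>
  match s with inl a => u a | inr a => rsum (fun _ : 'I_m => rsum d) end.
have Hb : forall s j, Rabs (x s j) <= M s.
  case=> a j /=.
    have [H1 H2] := (proj1 (HU j)) a; rewrite Rabs_right; lra.
  exact: (V_bound HLr Hd (HV j) a).
have [phi0 [Hphi0 [Lf HLf]]] := @BW_fin ('I_n + 'I_n)%type x M Hb.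
pose ystar0 := fun a => Lf (inl a). pose vstar0 := fun a => Lf (inr a).
have Hy0l : forall a, is_lim_seq (fun i => ys (phi0 i).+1 a) (ystar0 a) := fun a => HLf (inl a).
have Hv0l : forall a, is_lim_seq (fun i => vs (phi0 i).+1 a) (vstar0 a) := fun a => HLf (inr a).
have Hacc0 : accumulation_point (fun j => ys j.+1) (fun j => vs j.+1) ystar0 vstar0.
  exact: (subseq_to_acc (fun j => ys j.+1) (fun j => vs j.+1) ystar0 vstar0 phi0 Hphi0 Hy0l Hv0l).
pose Ps := fun j => P (ys j.+1) (vs j.+1).
have Lsub : is_lim_seq (fun i => Ps (phi0 i)) (P ystar0 vstar0).
  apply: (Psi_lim Hc HG (fun i => ys (phi0 i).+1) (fun i => vs (phi0 i).+1));
    [move=> i a; exact: Hyp0 | move=> i a; exact: Hvp0 | exact: Hy0l | exact: Hv0l].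
have Hlim : is_lim_seq Ps (P ystar0 vstar0).
  have Hex : ex_lim_seq Ps by apply: ex_lim_seq_decr => j; apply: Rlt_le; exact: Hdec.
  have Hc1 := Lim_seq_correct _ Hex.
  have Hc2 := lim_subseq Ps (Lim_seq Ps) phi0 Hphi0 Hc1.
  have E1 := is_lim_seq_unique _ _ Hc2. have E2 := is_lim_seq_unique _ _ Lsub.
  rewrite E1 in E2; rewrite E2 in Hc1; exact: Hc1.
split; first by split; [exact: Hdec | exists (P ystar0 vstar0); exact: Hlim].
split; first by exists ystar0, vstar0.
move=> ystar vstar Hacc.
have [phi [Hphi [Hyl Hvl]]] := acc_to_subseq Hacc.
have HUs : Upsilon u tau ystar.
  apply: (Ups_closed (fun i => ys (phi i).+1)) => // i; exact: HU.
have HVs : feasible_flows Delta Lambda d vstar.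
  apply: (V_closed HLr Hd (fun i => vs (phi i).+1)) => // i; exact: HV.
have Hrb : 0 < rho * beta / 2 by apply: Rdiv_lt_0_compat; [nra | lra].
have Hstep : forall j, sqnorm (vsub (vs j.+1) (vs j.+2)) <= (Ps j - Ps j.+1) / (rho * beta / 2).
  move=> j.
  have K := Psi_sc Hconv Hrho Hbeta (ys j.+1) (vs j.+1) (vs j.+2) (Hyp0 j) (HV j) (HV j.+1)
              (proj2 (Hvstep j.+1)).
  have K2 := proj2 (Hystep j.+1) (ys j.+1) (HU j).
  apply/Rle_div_r => //; rewrite /Ps; rewrite /P in K K2 |- *; lra.
have Hdiff : forall a, is_lim_seq (fun j => vs j.+2 a - vs j.+1 a) 0.
  move=> a.
  pose e := fun j => sqrt ((Ps j - Ps j.+1) / (rho * beta / 2)).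
  have He : is_lim_seq e 0.
    rewrite -sqrt_0; apply: (seq_cont1 sqrt); first exact: continuous_sqrt.
    have -> : 0 = (P ystar0 vstar0 - P ystar0 vstar0) / (rho * beta / 2) by field; lra.
    apply: is_lim_seq_mult'; last exact: is_lim_seq_const.
    apply: is_lim_seq_minus' => //; exact: (proj1 (is_lim_seq_incr_1 _ _) Hlim).
  apply: (is_lim_seq_le_le (fun j => - e j) _ e).
    move=> j.
    have := Hstep j.
    have := coord_le (vsub (vs j.+1) (vs j.+2)) (fun _ => 0) a.
    have Z : sqnorm (fun _ : 'I_n => 0) = 0.
      have -> : sqnorm (fun _ : 'I_n => 0) = rsum (fun _ : 'I_n => 0) by apply: rsum_ext => b; ring.
      rewrite rsum_const; ring.
    rewrite Z Rplus_0_r /vsub => H1 H2.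
    have H3 := sqrt_le_1_alt _ _ H2.
    have : Rabs (vs j.+2 a - vs j.+1 a) <= e j.
      rewrite /e -Rabs_Ropp; have -> : - (vs j.+2 a - vs j.+1 a) = vs j.+1 a - vs j.+2 a by ring.
      lra.
    move/Rabs_le_between; lra.
    have := proj1 (is_lim_seq_opp e 0) He; rewrite /= Ropp_0; done.
  exact: He.
have Hv2 : forall a, is_lim_seq (fun i => vs (phi i).+2 a) (vstar a).
  move=> a.
  apply: (is_lim_seq_ext (fun i => (vs (phi i).+2 a - vs (phi i).+1 a) + vs (phi i).+1 a)).
    move=> i; ring.
  have -> : vstar a = 0 + vstar a by ring.
  apply: is_lim_seq_plus'; last exact: Hvl.
  exact: (lim_subseq (fun j => vs j.+2 a - vs j.+1 a) 0 phi Hphi (Hdiff a)).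
split; first exact: HUs. split; first exact: HVs.
split.
- move=> v Hv.
  have L1 : is_lim_seq (fun i => P (ys (phi i).+1) (vs (phi i).+2)) (P ystar vstar).
    apply: (Psi_lim Hc HG (fun i => ys (phi i).+1) (fun i => vs (phi i).+2));
      [move=> i a; exact: Hyp0 | move=> i a; exact: Hvp0 | exact: Hyl | exact: Hv2].
  have L2 : is_lim_seq (fun i => P (ys (phi i).+1) v) (P ystar v).
    apply: (Psi_lim Hc HG (fun i => ys (phi i).+1) (fun i => v));
      [move=> i a; exact: Hyp0 | move=> i a; exact: (V_nonneg Hv a) | exact: Hyl | move=> a; exact: is_lim_seq_const].
  have HH := is_lim_seq_le _ _ _ _ (fun i => proj2 (Hvstep (phi i).+1) v Hv) L1 L2; exact HH.
- move=> y Hy.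
  have L1 : is_lim_seq (fun i => P (ys (phi i).+1) (vs (phi i).+1)) (P ystar vstar).
    apply: (Psi_lim Hc HG (fun i => ys (phi i).+1) (fun i => vs (phi i).+1));
      [move=> i a; exact: Hyp0 | move=> i a; exact: Hvp0 | exact: Hyl | exact: Hvl].
  have L2 : is_lim_seq (fun i => P y (vs (phi i).+1)) (P y vstar).
    apply: (Psi_lim Hc HG (fun i => y) (fun i => vs (phi i).+1));
      [move=> i a; exact: (proj1 ((proj1 Hy) a)) | move=> i a; exact: Hvp0 | move=> a; exact: is_lim_seq_const | exact: Hvl].
  have HH := is_lim_seq_le _ _ _ _ (fun i => proj2 (Hystep (phi i)) y Hy) L1 L2; exact HH.
Qed.
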